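(* Let $\mathcal{A}$ be a probabilistic automaton with state set $Q$. Every limit-word of the Markov monoid of $\mathcal{A}$ has $\sharp$-height at most $|Q|$; equivalently, the Markov monoid of $\mathcal{A}$ equals $S_{|Q|}$.
   Context: Fix a finite alphabet $A$ and a probabilistic automaton $\mathcal{A}=(Q,q_0,\Delta,F)$, $\Delta:Q\times A\to\mathcal{D}(Q)$. A limit-word is a map $\mathbf{u}:Q\times Q\to\{0,1\}$ such that every $s$ has some $t$ with $\mathbf{u}(s,t)=1$. Concatenation: $(\mathbf{u}\cdot\mathbf{v})(s,t)=1$ iff there is $q$ with $\mathbf{u}(s,q)=\mathbf{v}(q,t)=1$. $\mathbf{u}$ is idempotent if $\mathbf{u}\cdot\mathbf{u}=\mathbf{u}$; for idempotent $\mathbf{u}$, $s$ is $\mathbf{u}$-recurrent if for all $t$, $\mathbf{u}(s,t)=1\Rightarrow\mathbf{u}(t,s)=1$, and $\mathbf{u}^\sharp(s,t)=1$ iff $\mathbf{u}(s,t)=1$ and $t$ is $\mathbf{u}$-recurrent. For $a\in A$, $\mathbf{a}(s,t)=1$ iff $\Delta(s,a)(t)>0$; $\mathbf{1}$ is the identity. The Markov monoid of $\mathcal{A}$ is the smallest set of limit-words containing $\{\mathbf{a}\mid a\in A\}\cup\{\mathbf{1}\}$ and closed under concatenation and iteration of idempotents. For a set $T$ of limit-words let $\langle T\rangle$ be the set of finite concatenations of elements of $T$. Define $S_0=\langle\{\mathbf{a}\mid a\in A\}\cup\{\mathbf{1}\}\rangle$ and $S_{p+1}=\langle S_p\cup\{\mathbf{u}^\sharp\mid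 \mathbf{u}\in S_p,\ \mathbf{u}\text{ idempotent}\}\rangle$. The $\sharp$-height of a limit-word $\mathbf{u}$ is the least $p$ such that $\mathbf{u}\in S_p$. *)

(* Defs.v *)
From HB Require Import structures.
From mathcomp Require Import all_boot all_order all_algebra.
Set Implicit Arguments. Unset Strict Implicit. Unset Printing Implicit Defensive.
Import Order.TTheory GRing.Theory Num.Theory.
Local Open Scope ring_scope.

Record prob_automaton (R : realFieldType) (A Q : finType) := PA {
  pa_init : Q;
  pa_delta : Q -> A -> {ffun Q -> R};
  pa_final : {set Q};
  pa_delta_ge0 : forall q a t, 0 <= pa_delta q a t;
  pa_delta_sum : forall q a, \sum_(t : Q) pa_delta q a t = 1
}.

Definition lword (Q : finType) := {ffun Q * Q -> bool}.

Definition is_limit_word (Q : finType) (u : lword Q) : Prop :=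
  forall s : Q, exists t : Q, u (s, t).

Definition lw_mul (Q : finType) (u v : lword Q) : lword Q :=
  [ffun st : Q * Q => [exists q : Q, u (st.1, q) && v (q, st.2)]].

Definition lw_one (Q : finType) : lword Q := [ffun st : Q * Q => st.1 == st.2].

Definition lw_idempotent (Q : finType) (u : lword Q) : bool := lw_mul u u == u.

Definition lw_recurrent (Q : finType) (u : lword Q) (s : Q) : bool :=
  [forall t : Q, u (s, t) ==> u (t, s)].

Definition lw_sharp (Q : finType) (u : lword Q) : lword Q :=
  [ffun st : Q * Q => u st && lw_recurrent u st.2].

Definition lw_letter (R : realFieldType) (A Q : finType)
  (P : prob_automaton R A Q) (a : A) : lword Q :=
  [ffun st : Q * Q => 0 < pa_delta P st.1 a st.2].

Inductive markov_monoid (R : realFieldType) (A Q : finType)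
  (P : prob_automaton R A Q) : lword Q -> Prop :=
| mm_letter a : markov_monoid P (lw_letter P a)
| mm_one : markov_monoid P (@lw_one Q)
| mm_mul u v : markov_monoid P u -> markov_monoid P v -> markov_monoid P (lw_mul u v)
| mm_sharp u : markov_monoid P u -> lw_idempotent u -> markov_monoid P (lw_sharp u).

Inductive lw_gen (Q : finType) (T : lword Q -> Prop) : lword Q -> Prop :=
| lg_base u : T u -> lw_gen T u
| lg_mul u v : lw_gen T u -> lw_gen T v -> lw_gen T (lw_mul u v).

Fixpoint S_level (R : realFieldType) (A Q : finType)
  (P : prob_automaton R A Q) (p : nat) : lword Q -> Prop :=
  match p with
  | 0 => lw_gen (fun u => (exists a, u = lw_letter P a) \/ u = @lw_one Q)
  | p'.+1 => lw_gen (fun u => S_level P p' u \/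
                 exists v, [/\ S_level P p' v, lw_idempotent v & u = lw_sharp v])
  end.

Definition sharp_height_le (R : realFieldType) (A Q : finType)
  (P : prob_automaton R A Q) (u : lword Q) (n : nat) : Prop :=
  exists p, (p <= n)%N /\ S_level P p u.

(* Main.v *)
Require Import Defs.
From mathcomp Require Import all_boot all_order all_algebra.
From mathcomp Require Import zify.
Set Implicit Arguments. Unset Strict Implicit. Unset Printing Implicit Defensive.
Import Order.TTheory GRing.Theory Num.Theory.

Section Aux.

Lemma mulP (Q : finType) (u v : lword Q) s t :
  reflect (exists q, u (s,q) /\ v (q,t)) (lw_mul u v (s,t)).
Proof.
rewrite /lw_mul ffunE /=; apply: (iffP existsP).
- by move=> [q /andP[h1 h2]]; exists q.
- by move=> [q [h1 h2]]; exists q; rewrite h1 h2.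
Qed.

Lemma lw_mulA (Q:finType) (u v w : lword Q) :
  lw_mul u (lw_mul v w) = lw_mul (lw_mul u v) w.
Proof.
apply/ffunP=> -[s t]; apply/idP/idP.
- move/mulP=> [p [hu /mulP [q [hv hw]]]]; apply/mulP; exists q; split=>//.
  by apply/mulP; exists p.
- move/mulP=> [q [/mulP [p [hu hv]] hw]]; apply/mulP; exists p; split=>//.
  by apply/mulP; exists q.
Qed.

Lemma oneE (Q : finType) s t : (@lw_one Q) (s,t) = (s == t).
Proof. by rewrite ffunE. Qed.

Lemma mul1w (Q : finType) (u : lword Q) : lw_mul (@lw_one Q) u = u.
Proof.
apply/ffunP=> -[s t]; apply/idP/idP.
- by move/mulP=> [q []]; rewrite oneE => /eqP <-.
- by move=> h; apply/mulP; exists s; rewrite oneE eqxx.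
Qed.

Lemma mulw1 (Q : finType) (u : lword Q) : lw_mul u (@lw_one Q) = u.
Proof.
apply/ffunP=> -[s t]; apply/idP/idP.
- by move/mulP=> [q []]; rewrite oneE => h /eqP <-.
- by move=> h; apply/mulP; exists t; rewrite oneE eqxx.
Qed.

Lemma idem_trans (Q : finType) (f : lword Q) x y z :
  lw_idempotent f -> f (x,y) -> f (y,z) -> f (x,z).
Proof. by move/eqP=> H hxy hyz; rewrite -H; apply/mulP; exists y. Qed.

Lemma recP (Q : finType) (f : lword Q) r :
  reflect (forall t, f (r,t) -> f (t,r)) (lw_recurrent f r).
Proof.
apply: (iffP forallP) => H t.
- by move: (H t) => /implyP.
- by apply/implyP; apply: H.
Qed.

Lemma rec_refl (Q : finType) (f : lword Q) r :
  lw_idempotent f -> is_limit_word f -> lw_recurrent f r -> f (r,r).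
Proof.
move=> Hi Ht /recP Hr; case: (Ht r) => t ht; exact: idem_trans Hi ht (Hr _ ht).
Qed.

Lemma rec_succ (Q : finType) (f : lword Q) r u :
  lw_idempotent f -> lw_recurrent f r -> f (r,u) -> lw_recurrent f u.
Proof.
move=> Hi /recP Hr hru; apply/recP => w huw.
have hrw := idem_trans Hi hru huw.
exact: idem_trans Hi (Hr _ hrw) hru.
Qed.

Definition lrow (Q : finType) (f : lword Q) r : {set Q} := [set t | f (r,t)].
Definition recs (Q : finType) (f : lword Q) : {set Q} := [set r | lw_recurrent f r].
Definition classes (Q : finType) (f : lword Q) := [set lrow f r | r in recs f].
Definition kk (Q : finType) (f : lword Q) := #|classes f|.

Definition stable (Q : finType) (g : lword Q) :=
  lw_idempotent g /\ forall s t, g (s,t) -> lw_recurrent g t.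

Definition below (Q : finType) (f g : lword Q) :=
  exists a b, f = lw_mul a (lw_mul g b).

Lemma col_refl (Q : finType) (g : lword Q) p q : stable g -> g (p,q) -> g (q,q).
Proof.
move=> [Hi Hs] h.
have : lw_mul g g (p,q) by rewrite (eqP Hi).
move/mulP=> [w [h1 h2]]; have /recP Hr := Hs _ _ h1.
exact: idem_trans Hi (Hr _ h2) h2.
Qed.

Lemma kk_le (Q : finType) (g : lword Q) : kk g <= #|Q|.
Proof. exact: leq_trans (leq_imset_card _ _) (max_card _). Qed.

Lemma key (Q : finType) (f g : lword Q) :
  lw_idempotent f -> is_limit_word f -> stable g -> below f g ->
  kk f <= kk g /\ (kk f = kk g -> lw_sharp f = f).
Proof.
move=> Hfi Hft [Hgi Hgs] [a [b Hf]].
have Hg : stable g by [].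
have fE : forall s t, f (s,t) <-> exists p q, [/\ a (s,p), g (p,q) & b (q,t)].
  move=> s t; rewrite Hf; split.
  - by move/mulP=> [p [h1 /mulP [q [h2 h3]]]]; exists p, q.
  - by move=> [p [q [h1 h2 h3]]]; apply/mulP; exists p; split=>//; apply/mulP; exists q.
pose phi r := if [pick q | [exists p, a (r,p) && g (p,q)] && b (q,r)] is Some q
              then q else r.
have phiP : forall r, f (r,r) -> exists p, [/\ a (r,p), g (p, phi r) & b (phi r, r)].
  move=> r /fE [p [q [h1 h2 h3]]]; rewrite /phi; case: pickP.
  - by move=> q' /andP[/existsP[p' /andP[h1' h2']] h3']; exists p'.
  - move=> H; move: (H q); rewrite h3 andbT => /negbT /existsPn /(_ p).
    by rewrite h1 h2.
have recf : forall r, r \in recs f -> f (r,r).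
  by move=> r; rewrite inE => hr; apply: rec_refl.
pose Gset := [set lrow g (phi r) | r in recs f].
have inj : forall r r', r \in recs f -> r' \in recs f ->
    lrow g (phi r) = lrow g (phi r') -> lrow f r = lrow f r'.
  move=> r r' hr hr' heq.
  have [p [h1 h2 h3]] := phiP r (recf r hr).
  have [p' [h1' h2' h3']] := phiP r' (recf r' hr').
  have hgg : g (phi r, phi r').
    have : phi r' \in lrow g (phi r') by rewrite inE; exact: col_refl h2'.
    by rewrite -heq inE.
  have hff : f (r, r').
    by apply/fE; exists p, (phi r'); split=>//; exact: idem_trans Hgi h2 hgg.
  move: hr; rewrite inE => /recP Hr.
  apply/setP=> t; rewrite !inE; apply/idP/idP => h.
  - exact: idem_trans Hfi (Hr _ hff) h.
  - exact: idem_trans Hfi hff h.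
pose K (Y : {set Q}) := if [pick r in recs f | lrow g (phi r) == Y] is Some r
                        then lrow f r else set0.
have sub1 : classes f \subset K @: Gset.
  apply/subsetP=> X /imsetP [r hr ->]; apply/imsetP; exists (lrow g (phi r)).
    by apply/imsetP; exists r.
  rewrite /K; case: pickP.
  - by move=> r' /andP[hr' /eqP heq]; apply: inj.
  - by move=> H; move: (H r); rewrite hr eqxx.
have sub2 : Gset \subset classes g.
  apply/subsetP=> Y /imsetP [r hr ->]; apply/imsetP; exists (phi r) => //.
  have [p [h1 h2 h3]] := phiP r (recf r hr).
  by rewrite inE; apply: Hgs h2.
have c1 : kk f <= #|Gset| := leq_trans (subset_leq_card sub1) (leq_imset_card _ _).
have c2 : #|Gset| <= kk g := subset_leq_card sub2.
split; first exact: leq_trans c1 c2.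
move=> heq.
have GE : Gset = classes g.
  by apply/eqP; rewrite eqEcard sub2 /=; rewrite /kk in heq c1; rewrite -heq.
apply/ffunP=> -[s t]; rewrite ffunE /=.
case h: (f (s,t)) => //=.
have [p [q [h1 h2 h3]]] := (fE s t).1 h.
have : lrow g q \in Gset by rewrite GE; apply/imsetP; exists q => //; rewrite inE; apply: Hgs h2.
move=> /imsetP [r hr heq'].
have hgq : g (phi r, q).
  have : q \in lrow g q by rewrite inE; exact: col_refl h2.
  by rewrite heq' inE.
have [p' [h1' h2' h3']] := phiP r (recf r hr).
have hrt : f (r,t).
  by apply/fE; exists p', q; split=>//; exact: idem_trans Hgi h2' hgq.
by apply: rec_succ Hfi _ hrt; move: hr; rewrite inE.
Qed.

Lemma rec_exists (Q : finType) (e : lword Q) s :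
  lw_idempotent e -> is_limit_word e -> exists u, e (s,u) /\ lw_recurrent e u.
Proof.
move=> Hi Ht; case: (Ht s) => t0 h0.
have P0 : t0 \in lrow e s by rewrite inE.
case: (arg_minnP (fun t => #|lrow e t|) P0) => t ht Hmin.
have ht' : t \in lrow e s := ht.
have hst : e (s,t) by move: ht'; rewrite inE.
have eqrow : forall x, e (t,x) -> lrow e x = lrow e t.
  move=> x htx; apply/eqP; rewrite eqEcard.
  have sb : lrow e x \subset lrow e t.
    by apply/subsetP=> y; rewrite !inE => hy; exact: idem_trans Hi htx hy.
  rewrite sb /=; apply: Hmin.
  suff hx : x \in lrow e s by exact: hx.
  rewrite inE; exact: idem_trans Hi hst htx.
case: (Ht t) => u htu; exists u; split; first exact: idem_trans Hi hst htu.
apply/recP=> v huv.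
have htv := idem_trans Hi htu huv.
have : u \in lrow e t by rewrite inE.
by rewrite -(eqrow v htv) inE.
Qed.

Lemma sharp_total (Q : finType) (e : lword Q) :
  lw_idempotent e -> is_limit_word e -> is_limit_word (lw_sharp e).
Proof.
move=> Hi Ht s; case: (rec_exists s Hi Ht) => u [h1 h2]; exists u.
by rewrite ffunE /= h1 h2.
Qed.

Lemma sharpE (Q : finType) (e : lword Q) s t :
  lw_sharp e (s,t) = e (s,t) && lw_recurrent e t.
Proof. by rewrite ffunE. Qed.

Lemma sharp_stable (Q : finType) (e : lword Q) :
  lw_idempotent e -> is_limit_word e -> stable (lw_sharp e).
Proof.
move=> Hi Ht; split.
- apply/eqP/ffunP=> -[s t]; apply/idP/idP.
  + move/mulP=> [q []]; rewrite !sharpE => /andP[h1 _] /andP[h2 h3].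
    by rewrite h3 (idem_trans Hi h1 h2).
  + rewrite sharpE => /andP[h1 h2]; apply/mulP; exists t; rewrite !sharpE h1 h2.
    split=>//; rewrite ?andbT; exact: rec_refl.
- move=> s t; rewrite sharpE => /andP[h1 h2]; apply/recP => u.
  rewrite !sharpE => /andP[h3 h4]; move/recP: (h2) => Hr.
  by rewrite (Hr _ h3) h2.
Qed.

Lemma kk_sharp (Q : finType) (e : lword Q) :
  lw_idempotent e -> is_limit_word e -> kk (lw_sharp e) <= kk e.
Proof.
move=> Hi Ht; apply: subset_leq_card; apply/subsetP=> X /imsetP [r hr ->].
move: hr; rewrite inE => /recP Hr.
have hre : lw_recurrent e r.
  case: (rec_exists r Hi Ht) => z [h1 h2].
  have : lw_sharp e (r,z) by rewrite sharpE h1 h2.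
  by move/Hr; rewrite sharpE => /andP[].
apply/imsetP; exists r; first by rewrite inE.
apply/setP=> t; rewrite !inE sharpE; apply/andP/idP => [[] //|h]; split=>//.
exact: rec_succ hre h.
Qed.

Lemma S_succ (R : realFieldType) (A Q : finType) (P : prob_automaton R A Q) p u :
  S_level P p u -> S_level P p.+1 u.
Proof. by move=> h; apply: lg_base; left. Qed.

Lemma S_mono (R : realFieldType) (A Q : finType) (P : prob_automaton R A Q) p q u :
  p <= q -> S_level P p u -> S_level P q u.
Proof.
move=> /subnK <-; elim: (q - p) => [|k IH] h //=.
by rewrite ?addSn; apply: S_succ; apply: IH.
Qed.

Lemma S_mul (R : realFieldType) (A Q : finType) (P : prob_automaton R A Q) p u v :
  S_level P p u -> S_level P p v -> S_level P p (lw_mul u v).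
Proof. by case: p => [|p] hu hv; apply: lg_mul. Qed.

Lemma S_MM (R : realFieldType) (A Q : finType) (P : prob_automaton R A Q) p u :
  S_level P p u -> markov_monoid P u.
Proof.
elim: p u => [|p IH] u /=; elim=> [w Hw|w1 w2 _ H1 _ H2].
- by case: Hw => [[a ->]|->]; constructor.
- exact: mm_mul.
- case: Hw => [/IH //|[v [hv hi ->]]]; apply: mm_sharp => //; exact: IH.
- exact: mm_mul.
Qed.

Lemma letter_total (R : realFieldType) (A Q : finType) (P : prob_automaton R A Q) a :
  is_limit_word (lw_letter P a).
Proof.
move=> s; case: (pickP (fun t => (0 < pa_delta P s a t)%R)) => [t ht|H].
  by exists t; rewrite ffunE.
exfalso; have := pa_delta_sum P s a; rewrite big1 => [|t _].
  by move/eqP; rewrite eq_sym GRing.oner_eq0.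
by have := pa_delta_ge0 P s a t; rewrite le_eqVlt H orbF => /eqP <-.
Qed.

Lemma mul_total (Q : finType) (u v : lword Q) :
  is_limit_word u -> is_limit_word v -> is_limit_word (lw_mul u v).
Proof.
move=> hu hv s; case: (hu s) => q h1; case: (hv q) => t h2.
by exists t; apply/mulP; exists q.
Qed.

Lemma one_stable (Q : finType) : stable (@lw_one Q).
Proof.
split; first by apply/eqP; apply: mul1w.
move=> s t _; apply/recP=> u; rewrite !oneE => /eqP ->; exact: eqxx.
Qed.

Lemma MM_S (R : realFieldType) (A Q : finType) (P : prob_automaton R A Q) :
  forall u, markov_monoid P u -> is_limit_word u /\
    exists g, [/\ stable g, below u g & S_level P (#|Q| - kk g) u].
Proof.
have base : forall w, S_level P 0 w -> exists g,
    [/\ stable g, below w g & S_level P (#|Q| - kk g) w].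
  move=> w hw; exists (@lw_one Q); split.
  - exact: one_stable.
  - by exists w, (@lw_one Q); rewrite mul1w mulw1.
  - exact: S_mono hw.
move=> u hu; elim: hu => [a|| u1 v1 _ [tu [g1 [s1 [a1 [b1 e1]] l1]]] _ [tv [g2 [s2 [a2 [b2 e2]] l2]]]
       | e _ [te [g [sg [a [b eE]] l]]] Hi].
- split; first exact: letter_total.
  by apply: base; apply: lg_base; left; exists a.
- split; first by move=> s; exists s; rewrite oneE.
  by apply: base; apply: lg_base; right.
- split; first exact: mul_total.
  have bu : below (lw_mul u1 v1) g1.
    by exists a1, (lw_mul b1 v1); rewrite e1 -!lw_mulA.
  have bv : below (lw_mul u1 v1) g2.
    by exists (lw_mul u1 a2), b2; rewrite e2 lw_mulA.
  case: (leqP (kk g1) (kk g2)) => hk.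
  + exists g1; split => //; apply: S_mul => //; apply: S_mono l2; lia.
  + exists g2; split => //; apply: S_mul => //; apply: S_mono l1; lia.
- split; first exact: sharp_total.
  have [k1 k2] := key Hi te sg (ex_intro _ a (ex_intro _ b eE)).
  case: (eqVneq (lw_sharp e) e) => hs.
    by exists g; split => //; [exists a, b; rewrite hs | rewrite hs].
  have hlt : kk e < kk g by rewrite ltn_neqAle k1 andbT; apply/eqP => /k2 he; move: hs; rewrite he eqxx.
  exists (lw_sharp e); split.
  + exact: sharp_stable Hi te.
  + by exists (@lw_one Q), (@lw_one Q); rewrite mulw1 mul1w.
  + have h1 : S_level P (#|Q| - kk g).+1 (lw_sharp e).
      by apply: lg_base; right; exists e.
    apply: S_mono h1; have := kk_sharp Hi te; have := kk_le g; lia.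
Qed.

End Aux.

Theorem theorem4p7 (R : realFieldType) (A Q : finType) (P : prob_automaton R A Q) :
  (forall u : lword Q, markov_monoid P u -> sharp_height_le P u #|Q|) /\
  (forall u : lword Q, markov_monoid P u <-> S_level P #|Q| u).
Proof.
have H : forall u, markov_monoid P u -> S_level P #|Q| u.
  move=> u /MM_S [_ [g [_ _ l]]]; apply: S_mono l; exact: leq_subr.
split.
- by move=> u hu; exists #|Q|; split=> //; apply: H.
- move=> u; split; first exact: H.
  exact: S_MM.
Qed.
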